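(* Let $\Delta,\Gamma\in\mathbb{R}$ with $2+3\Delta\Gamma\neq 0$, define $$\sigma:=3\Gamma(1+\Delta\Gamma),\qquad s_1^2:=\Gamma\,\frac{2+3\Delta\Gamma}{1+\Delta\Gamma+(1-\Delta)(1+3\Delta\Gamma+3\Delta^2\Gamma^2)},$$ and assume that the denominator is nonzero and $s_1^2>0$ (this holds in particular whenever $0\le\Delta\le1$ and $\Gamma>0$). For a unit vector $\mathbf{k}\in S^2$, define the linear map $P(\mathbf{k})$ on state vectors $V=(K_{ab},N_{ab},a_b)\in\mathbb{R}^{9}\times\mathbb{R}^9\times\mathbb{R}^3$ by $P(\mathbf{k})V=(\tilde K_{ab},\tilde N_{ab},\tilde a_b)$ with $$\tilde K_{ab}=\varepsilon_a{}^{cd}k_cN_{db}+k_aa_b-\frac{\Delta}{2+3\Delta\Gamma}\delta_{ab}\Big[(\Gamma-\sigma)\varepsilon^{fcd}k_fN_{cd}+(1+\Gamma+\Delta\sigma)k^ca_c\Big],$$ $$\tilde N_{ab}=-\varepsilon_a{}^{cd}k_cK_{db}+\Delta\Gamma\,\varepsilon_{ab}{}^ck_cK,\qquad \tilde a_b=s_1^2k^aK_{ab}+\big[\Gamma-s_1^2(1+\Delta\Gamma)\big]k_bK.$$ Let $H$ be the ($\mathbf{k}$-independent) symmetric positive-definite matrix defined by $V^THV:=K^{ab}K_{ab}+N^{ab}N_{ab}+s_1^{-2}a^ba_b$. Then $V_1^THP(\mathbf{k})V_2=V_2^THP(\mathbf{k})V_1$ for all state vectors $V_1,V_2$ and all $\mathbf{k}\in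 S^2$, i.e. $HP(\mathbf{k})=P(\mathbf{k})^TH$; thus the family $P(\mathbf{k})$ is symmetric hyperbolic.
   Context: Indices $a,b,c,d,f\in\{1,2,3\}$ are raised and lowered with $\delta_{ab}$, repeated indices are summed, $\varepsilon_{abc}$ is the totally antisymmetric symbol with $\varepsilon_{123}=1$, and $K:=\delta^{ab}K_{ab}$. $K_{ab}$ and $N_{ab}$ are arbitrary (not necessarily symmetric) real $3\times3$ matrices. (This symbol corresponds to the Einstein-æther coupling choice $c_1=\Delta s_1^2$, $c_2=\Delta\Gamma$, $c_{13}=0$, $c_{14}=\Delta$.) *)

(* Defs.v *)
From Stdlib Require Import Reals Lra.
Open Scope R_scope.

Inductive idx : Type := i1 | i2 | i3.

Definition idx_eqb (a b : idx) : bool :=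
  match a, b with
  | i1, i1 | i2, i2 | i3, i3 => true
  | _, _ => false
  end.

Definition sum3 (f : idx -> R) : R := f i1 + f i2 + f i3.

Definition delta (a b : idx) : R := if idx_eqb a b then 1 else 0.

Definition eps (a b c : idx) : R :=
  match a, b, c with
  | i1, i2, i3 | i2, i3, i1 | i3, i1, i2 => 1
  | i1, i3, i2 | i3, i2, i1 | i2, i1, i3 => -1
  | _, _, _ => 0
  end.

Record state : Type := mkState {
  SK : idx -> idx -> R;
  SN : idx -> idx -> R;
  Sa : idx -> R }.

Definition trK (K : idx -> idx -> R) : R := sum3 (fun a => K a a).

Definition sigma (D G : R) : R := 3 * G * (1 + D * G).

Definition s1sq_den (D G : R) : R :=
  1 + D * G + (1 - D) * (1 + 3 * D * G + 3 * D ^ 2 * G ^ 2).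

Definition s1sq (D G : R) : R := G * ((2 + 3 * D * G) / s1sq_den D G).

Definition Pk (D G : R) (k : idx -> R) (V : state) : state :=
  let K := SK V in let N := SN V in let av := Sa V in
  mkState
    (fun a b =>
       sum3 (fun c => sum3 (fun d => eps a c d * k c * N d b)) + k a * av b
       - D / (2 + 3 * D * G) * delta a b *
         ((G - sigma D G) *
            sum3 (fun f => sum3 (fun c => sum3 (fun d => eps f c d * k f * N c d)))
          + (1 + G + D * sigma D G) * sum3 (fun c => k c * av c)))
    (fun a b =>
       - sum3 (fun c => sum3 (fun d => eps a c d * k c * K d b))
       + D * G * sum3 (fun c => eps a b c * k c) * trK K)
    (fun b =>
       s1sq D G * sum3 (fun a => k a * K a b)
       + (G - s1sq D G * (1 + D * G)) * k b * trK K).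

Definition Hform (D G : R) (V1 V2 : state) : R :=
  sum3 (fun a => sum3 (fun b => SK V1 a b * SK V2 a b))
  + sum3 (fun a => sum3 (fun b => SN V1 a b * SN V2 a b))
  + / s1sq D G * sum3 (fun b => Sa V1 b * Sa V2 b).

(* Main.v *)
Require Import Defs.
From Stdlib Require Import Reals.
From Stdlib Require Import Lra.
Open Scope R_scope.

Theorem mainTheorem4 (D G : R)
  (h2 : 2 + 3 * D * G <> 0)
  (hden : s1sq_den D G <> 0)
  (hs : 0 < s1sq D G)
  (k : idx -> R)
  (hk : k i1 ^ 2 + k i2 ^ 2 + k i3 ^ 2 = 1)
  (V1 V2 : state) :
  Hform D G V1 (Pk D G k V2) = Hform D G V2 (Pk D G k V1).
Proof.
  assert (hG : G <> 0).
  { intro e. unfold s1sq in hs. rewrite e in hs. lra. }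
  destruct V1 as [K1 N1 a1]; destruct V2 as [K2 N2 a2].
  unfold Hform, Pk, trK, sum3, delta, eps, Defs.sigma, s1sq; simpl.
  revert hden; unfold s1sq_den; intro hden.
  field; auto.
Qed.
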